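(* Let the words $C_n$, $D_n$ over $\{1,2\}$ be defined by $C_1=1$, $D_1=2$, $C_{k+1}=C_k\,1\,D_k$, $D_{k+1}=C_k\,2\,D_k$ for $k\ge 1$. For a word $w=w_1\cdots w_m$, let $N_{12}(w)$ be the number of pairs $i<j$ with $w_i=1$, $w_j=2$, and $N_{21}(w)$ the number of pairs $i<j$ with $w_i=2$, $w_j=1$. Then for all $n\geq 2$, $$N_{12}(C_n)=N_{12}(D_n)=2\cdot 4^{n-2}+(n-2)\cdot 2^{n-2},\qquad N_{21}(C_n)=N_{21}(D_n)=2\cdot 4^{n-2}-n\cdot 2^{n-2}.$$
   Context: $N_{12}(w)$ and $N_{21}(w)$ are the numbers of occurrences in $w$ of the classical patterns $1\text{-}2$ and $2\text{-}1$ respectively. *)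

(* Defs.v *)
From mathcomp Require Import all_boot.
Set Implicit Arguments. Unset Strict Implicit. Unset Printing Implicit Defensive.

(* CD k = (C_(k+1), D_(k+1)), so C_1 = [:: 1], D_1 = [:: 2],
   C_(k+1) = C_k 1 D_k, D_(k+1) = C_k 2 D_k. *)
Fixpoint CD (k : nat) : seq nat * seq nat :=
  match k with
  | 0 => ([:: 1], [:: 2])
  | k'.+1 => let (c, d) := CD k' in (c ++ 1 :: d, c ++ 2 :: d)
  end.

(* C n and D n for n >= 1 (index n, so C 1 = [:: 1]); C 0 := C 1 is junk. *)
Definition C (n : nat) : seq nat := (CD n.-1).1.
Definition D (n : nat) : seq nat := (CD n.-1).2.

Definition Npat (a b : nat) (w : seq nat) : nat :=
  \sum_(j < size w) \sum_(i < j) ((nth 0 w i == a) && (nth 0 w j == b)).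

Definition N12 := Npat 1 2.
Definition N21 := Npat 2 1.

(* Main.v *)
Require Import Defs.
From mathcomp Require Import all_boot.
From mathcomp Require Import zify.

Lemma count_sum (a : nat) (s : seq nat) :
  \sum_(i < size s) (nth 0 s i == a) = count_mem a s.
Proof.
elim: s => [|x s IH]; first by rewrite big_ord0.
by rewrite /= big_ord_recl /= -IH.
Qed.

Lemma Npat_rcons a b s x :
  Npat a b (rcons s x) = Npat a b s + (x == b) * count_mem a s.
Proof.
rewrite /Npat size_rcons big_ord_recr /=; congr (_ + _).
  apply: eq_bigr => j _; apply: eq_bigr => i _.
  have hj := ltn_ord j; have hi := ltn_ord i.
  by rewrite !nth_rcons /= hj (ltn_trans hi hj).
rewrite nth_rcons ltnn eqxx -count_sum big_distrr /=.
apply: eq_bigr => i _; rewrite nth_rcons (ltn_ord i).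
by case: (nth 0 s i == a); case: (x == b).
Qed.

Lemma Npat_cat a b s t :
  Npat a b (s ++ t) = Npat a b s + Npat a b t + count_mem a s * count_mem b t.
Proof.
elim/last_ind: t => [|t x IH].
  by rewrite cats0 /Npat /= big_ord0 muln0 !addn0.
rewrite -rcons_cat !Npat_rcons IH count_cat -cats1 count_cat.
rewrite /=; lia.
Qed.

Lemma Npat_cons a b x s :
  Npat a b (x :: s) = (x == a) * count_mem b s + Npat a b s.
Proof.
have -> : x :: s = [:: x] ++ s by [].
rewrite Npat_cat /= addn0.
have -> : Npat a b [:: x] = 0 by rewrite /Npat /= big_ord_recl big_ord0 big_ord0.
by rewrite add0n addnC.
Qed.

Lemma counts m : let x := 2 ^ m in
  [/\ count_mem 1 (CD m).1 = x, count_mem 2 (CD m).1 + 1 = x,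
      count_mem 1 (CD m).2 + 1 = x & count_mem 2 (CD m).2 = x].
Proof.
elim: m => [|m [h1 h2 h3 h4]] /=; first by [].
case: (CD m) h1 h2 h3 h4 => c d /= h1 h2 h3 h4.
rewrite !count_cat /= expnS; split; lia.
Qed.

Lemma CD_S k : CD k.+1 = ((CD k).1 ++ 1 :: (CD k).2, (CD k).1 ++ 2 :: (CD k).2).
Proof. by rewrite /=; case: (CD k). Qed.

Lemma main m : let x := 2 ^ m in
  [/\ N12 (CD m.+1).1 = 2 * (x * x) + m * x, N12 (CD m.+1).2 = 2 * (x * x) + m * x,
      N21 (CD m.+1).1 + (m + 2) * x = 2 * (x * x) &
      N21 (CD m.+1).2 + (m + 2) * x = 2 * (x * x)].
Proof.
elim: m => [|m IH]; first by rewrite /= /N12 /N21 /Npat /= !big_ord_recr !big_ord0.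
rewrite /N12 /N21 (CD_S m.+1).
case: (counts m.+1).
case: IH.
rewrite /N12 /N21 /=.
case: (CD m.+1) => c d /=.
rewrite !Npat_cat !Npat_cons /= expnS.
set x := 2 ^ m.
move=> h1 h2 h3 h4 k1 k2 k3 k4.
split; nia.
Qed.

Theorem proposition3 (n : nat) : 2 <= n ->
  N12 (C n) = 2 * 4 ^ (n - 2) + (n - 2) * 2 ^ (n - 2) /\
  N12 (D n) = 2 * 4 ^ (n - 2) + (n - 2) * 2 ^ (n - 2) /\
  N21 (C n) = 2 * 4 ^ (n - 2) - n * 2 ^ (n - 2) /\
  N21 (D n) = 2 * 4 ^ (n - 2) - n * 2 ^ (n - 2).
Proof.
case: n => [|[|m]] //= _.
rewrite /C /D /= subn2 /=.
have -> : 4 ^ m = 2 ^ m * 2 ^ m by rewrite -expnMn.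
case: (main m) => /= h1 h2 h3 h4.
split; first by [].
split; first by [].
split; lia.
Qed.
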